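(* Let $Y$ be a metric space with Assouad--Nagata dimension $n$, with constant $c$ as in the definition. There are $a>0$ and $0<b<1$ (depending only on $n$ and $c$) with the following property. Let $w:Y\to[0,\infty)$ be $1$-Lipschitz and $Y_{>0}=w^{-1}((0,\infty))$. Then there is a cover $\mathcal B=(B_i)_{i\in I}$ of $Y_{>0}$ such that (1) $\operatorname{diam}B_i\le a\inf w(B_i)$ for all $i\in I$; and (2) every set $U\subset Y$ with $\operatorname{diam}U\le b\inf w(U)$ meets at most $2(n+1)$ members of $\mathcal B$.
   Context: For $D,s>0$, a $D$-bounded covering of a metric space $Y$ is a family $(B_i)$ of subsets with $\operatorname{diam}B_i\le D$; its $s$-multiplicity is the least integer $m$ such that every $U\subset Y$ with $\operatorname{diam}U\le s$ meets at most $m$ of the $B_i$. The Assouad--Nagata dimension of $Y$ is the least integer $n$ for which there is $c>0$ such that for every $s>0$, $Y$ has a $cs$-bounded covering with $s$-multiplicity at most $n+1$. *)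

(* Defs.v *)
From Stdlib Require Import Reals List.
Open Scope R_scope.

Definition is_metric {Y : Type} (d : Y -> Y -> R) : Prop :=
  (forall x y, 0 <= d x y) /\
  (forall x y, d x y = 0 <-> x = y) /\
  (forall x y, d x y = d y x) /\
  (forall x y z, d x z <= d x y + d y z).

Definition diam_le {Y : Type} (d : Y -> Y -> R) (U : Y -> Prop) (r : R) : Prop :=
  forall x y, U x -> U y -> d x y <= r.

(* diam U <= a * inf w(U), unfolded: diam U <= a * w z for every z in U
   (for U empty this holds vacuously, as inf over the empty set is +oo) *)
Definition diam_le_inf {Y : Type} (d : Y -> Y -> R) (U : Y -> Prop)
  (a : R) (w : Y -> R) : Prop :=
  forall z, U z -> diam_le d U (a * w z).

Definition meets {Y : Type} (A B : Y -> Prop) : Prop := exists y, A y /\ B y.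

Definition meets_at_most {Y I : Type} (B : I -> Y -> Prop) (U : Y -> Prop) (m : nat) : Prop :=
  exists l : list I, (length l <= m)%nat /\ forall i, meets (B i) U -> In i l.

Definition covers {Y I : Type} (B : I -> Y -> Prop) : Prop :=
  forall y, exists i, B i y.

Definition has_bounded_covering {Y : Type} (d : Y -> Y -> R) (D s : R) (m : nat) : Prop :=
  exists (I : Type) (B : I -> Y -> Prop),
    covers B /\ (forall i, diam_le d (B i) D) /\
    (forall U : Y -> Prop, diam_le d U s -> meets_at_most B U m).

Definition AN_dim_witness {Y : Type} (d : Y -> Y -> R) (n : nat) (c : R) : Prop :=
  0 < c /\ forall s, 0 < s -> has_bounded_covering d (c * s) s (S n).

Definition AN_dim_eq {Y : Type} (d : Y -> Y -> R) (n : nat) : Prop :=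
  (exists c, AN_dim_witness d n c) /\
  (forall n' c', AN_dim_witness d n' c' -> (n <= n')%nat).

Definition one_lipschitz {Y : Type} (d : Y -> Y -> R) (w : Y -> R) : Prop :=
  forall x y, Rabs (w x - w y) <= d x y.

(* Main.v *)
Require Import Defs.
From Stdlib Require Import Reals ZArith List Lra Lia Classical ClassicalEpsilon.
Open Scope R_scope.

Lemma exp_le_mono x y : x <= y -> exp x <= exp y.
Proof. intros [H|H]; [left; apply exp_increasing; auto | subst; lra]. Qed.

Definition lev (x : R) : Z := Int_part (ln x).

Lemma lev_bounds x : 0 < x -> exp (IZR (lev x)) <= x /\ x < exp (IZR (lev x) + 1).
Proof.
  intros Hx. unfold lev. destruct (base_Int_part (ln x)) as [H1 H2].
  rewrite <- (exp_ln x Hx) at 2 3. split.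
  - apply exp_le_mono; lra.
  - apply exp_increasing; lra.
Qed.

Lemma e_gt2 : 2 < exp 1.
Proof. pose proof (exp_ineq1 1 ltac:(lra)). lra. Qed.

Lemma choose_fam {Y : Type} (P : Z -> forall J : Type, (J -> Y -> Prop) -> Prop) :
  (forall k, exists (J : Type) (C : J -> Y -> Prop), P k J C) ->
  exists (J : Z -> Type) (C : forall k, J k -> Y -> Prop), forall k, P k (J k) (C k).
Proof.
  intros H.
  pose (f := fun k => constructive_indefinite_description _ (H k)).
  exists (fun k => proj1_sig (f k)).
  exists (fun k => proj1_sig (constructive_indefinite_description _ (proj2_sig (f k)))).
  intros k. exact (proj2_sig (constructive_indefinite_description _ (proj2_sig (f k)))).
Qed.

Theorem lemma9p2 (n : nat) (c : R) :
  exists a b : R, 0 < a /\ 0 < b /\ b < 1 /\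
  forall (Y : Type) (d : Y -> Y -> R),
    is_metric d -> AN_dim_eq d n -> AN_dim_witness d n c ->
    forall w : Y -> R,
      (forall y, 0 <= w y) -> one_lipschitz d w ->
      exists (I : Type) (B : I -> Y -> Prop),
        (forall i y, B i y -> 0 < w y) /\
        (forall y, 0 < w y -> exists i, B i y) /\
        (forall i, diam_le_inf d (B i) a w) /\
        (forall U : Y -> Prop, diam_le_inf d U b w ->
           meets_at_most B U (2 * S n)).
Proof.
  exists (2 * Rabs c + 1), (1/2).
  split; [pose proof (Rabs_pos c); lra|]. split; [lra|]. split; [lra|].
  intros Y d Hd _ [Hc HAN] w Hw0 Hlip.
  rewrite Rabs_right by lra.
  pose (s := fun k : Z => exp (IZR k + 1) / 2).
  assert (Hs : forall k, 0 < s k) by (intros k; unfold s; pose proof (exp_pos (IZR k + 1)); lra).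
  destruct (choose_fam (fun k J C => covers C /\ (forall i, diam_le d (C i) (c * s k)) /\
        (forall U : Y -> Prop, diam_le d U (s k) -> meets_at_most C U (S n))))
    as [J [C HC]].
  { intros k. exact (HAN (s k) (Hs k)). }
  pose (B := fun (i : {k : Z & J k}) y =>
               C (projT1 i) (projT2 i) y /\ lev (w y) = projT1 i /\ 0 < w y).
  exists {k : Z & J k}, B.
  split; [intros i y [_ [_ H]]; exact H|].
  split.
  { intros y Hy. destruct (HC (lev (w y))) as [Hcov _].
    destruct (Hcov y) as [j Hj]. exists (existT _ (lev (w y)) j).
    unfold B; simpl; auto. }
  split.
  { intros [k j] z [Hz [Hlz Hpz]] x y [Hx _] [Hy _]. simpl in *.
    destruct (HC k) as [_ [Hdiam _]].
    pose proof (Hdiam j x y Hx Hy) as Hxy.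
    destruct (lev_bounds (w z) Hpz) as [Hlo _]. rewrite Hlz in Hlo.
    unfold s in Hxy. rewrite exp_plus in Hxy.
    pose proof exp_le_3. pose proof (exp_pos (IZR k)).
    assert (c * (exp (IZR k) * exp 1) <= c * (exp (IZR k) * 3)).
    { apply Rmult_le_compat_l; [lra|]. apply Rmult_le_compat_l; lra. }
    assert (c * exp (IZR k) <= c * w z) by (apply Rmult_le_compat_l; lra).
    assert (0 <= w z) by lra. nra. }
  intros U HU.
  assert (Hkey : forall y y', U y -> U y' -> 0 < w y -> 0 < w y' ->
                 (lev (w y') <= lev (w y) + 1)%Z).
  { intros y y' Hy Hy' Hpy Hpy'.
    destruct (ZArith_dec.Z_le_gt_dec (lev (w y')) (lev (w y) + 1)) as [|Hgt]; [auto|exfalso].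
    destruct (lev_bounds _ Hpy) as [_ Hhi].
    destruct (lev_bounds _ Hpy') as [Hlo _].
    assert (Hle : IZR (lev (w y)) + 1 + 1 <= IZR (lev (w y'))).
    { rewrite <- (plus_IZR _ 1), <- (plus_IZR _ 1). apply IZR_le. lia. }
    pose proof (exp_le_mono _ _ Hle) as He. rewrite exp_plus in He.
    pose proof (HU y Hy y y' Hy Hy') as Hd1.
    pose proof (Hlip y' y) as Hl. rewrite (proj1 (proj2 (proj2 Hd))) in Hl.
    pose proof (Rle_abs (w y' - w y)).
    pose proof e_gt2. pose proof (exp_pos (IZR (lev (w y)) + 1)). nra. }
  assert (Hk1 : exists k1, forall y, U y -> 0 < w y -> lev (w y) = k1 \/ lev (w y) = (k1 + 1)%Z).
  { destruct (classic (exists z, U z /\ 0 < w z)) as [[z0 [Hz0 Hp0]]|Hno].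
    - destruct (classic (exists y, U y /\ 0 < w y /\ lev (w y) = (lev (w z0) - 1)%Z))
        as [[y1 [Hy1 [Hp1 Hl1]]]|Hno1].
      + exists (lev (w z0) - 1)%Z. intros y Hy Hp.
        pose proof (Hkey y z0 Hy Hz0 Hp Hp0). pose proof (Hkey z0 y Hz0 Hy Hp0 Hp).
        pose proof (Hkey y1 y Hy1 Hy Hp1 Hp). lia.
      + exists (lev (w z0)). intros y Hy Hp.
        pose proof (Hkey y z0 Hy Hz0 Hp Hp0). pose proof (Hkey z0 y Hz0 Hy Hp0 Hp).
        destruct (Z.eq_dec (lev (w y)) (lev (w z0) - 1)) as [E|]; [|lia].
        exfalso. apply Hno1. eauto.
    - exists 0%Z. intros y Hy Hp. exfalso. apply Hno. eauto. }
  assert (Hlk : forall k, exists l : list (J k), (length l <= S n)%nat /\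
             forall j, meets (B (existT _ k j)) U -> In j l).
  { intros k.
    destruct (classic (exists y, U y /\ 0 < w y /\ lev (w y) = k)) as [[y [Hy [Hp Hl]]]|Hno].
    - destruct (HC k) as [_ [_ Hmult]].
      assert (HdU : diam_le d U (s k)).
      { intros x x' Hx Hx'. pose proof (HU y Hy x x' Hx Hx').
        destruct (lev_bounds _ Hp) as [_ Hhi]. rewrite Hl in Hhi. unfold s. lra. }
      destruct (Hmult U HdU) as [l [Hlen Hin]].
      exists l. split; auto. intros j [x [[Hx _] HUx]]. apply Hin. exists x; auto.
    - exists nil. split; [simpl; lia|]. intros j [x [[_ [Hl Hp]] HUx]].
      exfalso. apply Hno. simpl in Hl. eauto. }
  destruct Hk1 as [k1 Hk1].
  destruct (Hlk k1) as [l1 [Hl1 Hi1]].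
  destruct (Hlk (k1 + 1)%Z) as [l2 [Hl2 Hi2]].
  exists (map (existT _ k1) l1 ++ map (existT _ (k1 + 1)%Z) l2).
  split.
  { rewrite length_app, !length_map. lia. }
  intros [k j] Hm. apply in_or_app.
  destruct Hm as [x [[Hx [Hlx Hpx]] HUx]]. simpl in Hlx.
  assert (Hm : meets (B (existT _ k j)) U) by (exists x; unfold B; simpl; auto).
  destruct (Hk1 x HUx Hpx) as [E|E]; rewrite Hlx in E; subst k; clear Hx; revert j Hm; rewrite E; intros j Hm.
  - left. apply in_map. auto.
  - right. apply in_map. auto.
Qed.
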